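(* Let $n_2,n_3\ge 2$, $n=1+n_2+n_3$, and consider the Stiefel manifold $V_{1+n_2}\mathbb R^n=\mathrm{SO}(n)/\mathrm{SO}(n_3)$, with $\mathrm{SO}(n_3)$ acting on the last $n_3$ coordinates. Let $I_1=\{1\}$, $I_2=\{2,\dots,1+n_2\}$, $I_3=\{2+n_2,\dots,n\}$, and decompose $\mathfrak m=\mathfrak{so}(n_2)\oplus\mathfrak m_{12}\oplus\mathfrak m_{13}\oplus\mathfrak m_{23}$, where $\mathfrak{so}(n_2)=\mathrm{span}\{\xi_{ab}:a<b,\ a,b\in I_2\}$ and $\mathfrak m_{ij}=\mathrm{span}\{\xi_{ab}:a\in I_i,b\in I_j\}$. Consider the family of metrics $\Lambda=\lambda_2\mathrm{Id}_{\mathfrak{so}(n_2)}+\lambda_{12}\mathrm{Id}_{\mathfrak m_{12}}+\lambda_{13}\mathrm{Id}_{\mathfrak m_{13}}+\lambda_{23}\mathrm{Id}_{\mathfrak m_{23}}$ with all $\lambda$'s positive. For $X=X_{\mathfrak{so}(n_2)}+X_{\mathfrak m_{12}}+X_{\mathfrak m_{13}}+X_{\mathfrak m_{23}}\in\mathfrak m$ (components in the respective summands), $X$ is an equigeodesic vector for this family if and only if $$[X_{\mathfrak{so}(n_2)},X_{\mathfrak m_{12}}]=0,\ [X_{\mathfrak{so}(n_2)},X_{\mathfrak m_{23}}]=0,\ [X_{\mathfrak m_{12}},X_{\mathfrak m_{13}}]_{\mathfrak m}=0,\ [X_{\mathfrak m_{12}},X_{\mathfrak m_{23}}]_{\mathfrak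 m}=0,\ [X_{\mathfrak m_{13}},X_{\mathfrak m_{23}}]_{\mathfrak m}=0.$$
   Context: $E_{ab}$ is the $n\times n$ matrix with $1$ in entry $(a,b)$ and $0$ elsewhere; $\xi_{ab}=E_{ab}-E_{ba}$. $\mathfrak m$ is the orthogonal complement of $\mathfrak{so}(n_3)$ in $\mathfrak{so}(n)$ with respect to the negative of the Killing form; $[\cdot,\cdot]_{\mathfrak m}$ is the $\mathfrak m$-component of the bracket. A nonzero $X\in\mathfrak m$ is an equigeodesic vector (for a given family of $B$-symmetric positive operators $\Lambda$ on $\mathfrak m$) if $[X,\Lambda X]_{\mathfrak m}=0$ for every $\Lambda$ in the family. *)

(* Defs.v *)
From HB Require Import structures.
From mathcomp Require Import all_boot all_order all_algebra.
Set Implicit Arguments. Unset Strict Implicit. Unset Printing Implicit Defensive.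
Import Order.TTheory GRing.Theory Num.Theory.
Local Open Scope ring_scope.

(* Stiefel manifold V_{1+n2} R^n = SO(n)/SO(n3), n = 1 + n2 + n3.
   Indices are 0-based: index 0 is I_1, indices 1..n2 form I_2,
   indices n2+1 .. n2+n3 form I_3. *)

Definition cls (n2 : nat) (a : nat) : nat :=
  if a == 0%N then 1%N else if (a <= n2)%N then 2%N else 3%N.

Section Defs.
Variables (R : realFieldType) (n2 n3 : nat).
Notation N := (1 + n2 + n3)%N.
Notation M := 'M[R]_N.

Definition lbr (A B : M) : M := A *m B - B *m A.

Definition in_so (X : M) : Prop := X^T = - X.

(* m = orthogonal complement (w.r.t. -Killing form) of so(n3) (block I3 x I3) *)
Definition in_m (X : M) : Prop :=
  in_so X /\ forall a b : 'I_N, cls n2 a = 3%N -> cls n2 b = 3%N -> X a b = 0.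

Definition projm (X : M) : M :=
  \matrix_(a, b) if (cls n2 a == 3%N) && (cls n2 b == 3%N) then 0 else X a b.

(* component of X in the block spanned by xi_{ab}, a in I_i, b in I_j
   (i.e. entries (I_i x I_j) and (I_j x I_i)) *)
Definition blk (i j : nat) (X : M) : M :=
  \matrix_(a, b) if ((cls n2 a == i) && (cls n2 b == j))
                    || ((cls n2 a == j) && (cls n2 b == i)) then X a b else 0.

Definition Xso2 (X : M) : M := blk 2 2 X.
Definition X12 (X : M) : M := blk 1 2 X.
Definition X13 (X : M) : M := blk 1 3 X.
Definition X23 (X : M) : M := blk 2 3 X.

Definition Lam (l2 l12 l13 l23 : R) (X : M) : M :=
  l2 *: Xso2 X + l12 *: X12 X + l13 *: X13 X + l23 *: X23 X.

Definition equigeodesic (X : M) : Prop :=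
  in_m X /\ X != 0 /\
  forall l2 l12 l13 l23 : R, 0 < l2 -> 0 < l12 -> 0 < l13 -> 0 < l23 ->
    projm (lbr X (Lam l2 l12 l13 l23 X)) = 0.

End Defs.

Arguments in_m {R} n2 {n3} X.
Arguments projm {R} n2 {n3} X.
Arguments blk {R} n2 {n3} i j X.
Arguments Xso2 {R} n2 {n3} X.
Arguments X12 {R} n2 {n3} X.
Arguments X13 {R} n2 {n3} X.
Arguments X23 {R} n2 {n3} X.
Arguments Lam {R} n2 {n3} l2 l12 l13 l23 X.
Arguments equigeodesic {R} n2 {n3} X.

(* Main.v *)
Require Import Defs.
From mathcomp Require Import all_boot all_order all_algebra.
From mathcomp Require Import lra.
Set Implicit Arguments. Unset Strict Implicit. Unset Printing Implicit Defensive.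
Import Order.TTheory GRing.Theory Num.Theory.
Local Open Scope ring_scope.

Section H.
Variables (R : realFieldType) (n2 n3 : nat).
Notation N := (1 + n2 + n3)%N.
Notation M := 'M[R]_N.

Lemma cls_cases (a : nat) : [\/ cls n2 a = 1%N, cls n2 a = 2%N | cls n2 a = 3%N].
Proof. rewrite /cls; case: eqP => _; [by constructor 1|]; case: leqP => _; by [constructor 2|constructor 3]. Qed.

Lemma cls1 (a : nat) : cls n2 a = 1%N -> a = 0%N.
Proof. rewrite /cls; case: eqP => // _; by case: leqP. Qed.

Definition sp (s : nat -> nat -> bool) (Y : M) :=
  forall a b : 'I_N, s (cls n2 a) (cls n2 b) = false -> Y a b = 0.

Definition sB (i j : nat) := fun x y : nat => ((x == i) && (y == j)) || ((x == j) && (y == i)).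

Lemma blk_sp i j (Y : M) : sp (sB i j) (blk n2 i j Y).
Proof. by move=> a b; rewrite mxE /sB => ->. Qed.

Lemma spD s (P Q : M) : sp s P -> sp s Q -> sp s (P + Q).
Proof. by move=> hP hQ a b h; rewrite mxE hP // hQ // addr0. Qed.

Lemma spN s (P : M) : sp s P -> sp s (- P).
Proof. by move=> hP a b h; rewrite mxE hP // oppr0. Qed.

Lemma sp_projm s (P : M) : sp s P -> sp s (projm n2 P).
Proof. by move=> hP a b h; rewrite mxE hP //; case: ifP. Qed.

Lemma projm_id s (P : M) : sp s P -> s 3%N 3%N = false -> projm n2 P = P.
Proof.
move=> hP h3; apply/matrixP => a b; rewrite mxE.
case: ifP => // /andP [/eqP ha /eqP hb]; by rewrite hP // ha hb.
Qed.

Lemma mul_sp s t u (P Q : M) : sp s P -> sp t Q ->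
  (forall x y c : 'I_N, u (cls n2 x) (cls n2 y) = false -> s (cls n2 x) (cls n2 c) && t (cls n2 c) (cls n2 y) = false) -> sp u (P *m Q).
Proof.
move=> hP hQ hu a b h; rewrite mxE big1 // => c _.
have := hu _ _ c h; case e: (s _ _) => /= e2.
  by rewrite (hQ _ _ e2) mulr0.
by rewrite (hP _ _ e) mul0r.
Qed.

Lemma lbr_sp s t u (P Q : M) : sp s P -> sp t Q ->
  (forall x y c : 'I_N, u (cls n2 x) (cls n2 y) = false -> s (cls n2 x) (cls n2 c) && t (cls n2 c) (cls n2 y) = false) ->
  (forall x y c : 'I_N, u (cls n2 x) (cls n2 y) = false -> t (cls n2 x) (cls n2 c) && s (cls n2 c) (cls n2 y) = false) -> sp u (lbr P Q).
Proof.
move=> hP hQ h1 h2; apply: spD; [exact: mul_sp h1|apply: spN; exact: mul_sp h2].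
Qed.

Lemma disj s1 s2 (Y1 Y2 : M) : sp s1 Y1 -> sp s2 Y2 ->
  (forall x y : 'I_N, s1 (cls n2 x) (cls n2 y) && s2 (cls n2 x) (cls n2 y) = false) -> Y1 + Y2 = 0 -> Y1 = 0 /\ Y2 = 0.
Proof.
move=> h1 h2 hd hs.
have e1 : Y1 = 0.
  apply/matrixP => a b; have := congr1 (fun M : M => M a b) hs; rewrite !mxE.
  case e: (s1 (cls n2 a) (cls n2 b)).
    by have := hd a b; rewrite e /= => /h2 ->; rewrite addr0.
  by rewrite (h1 _ _ e).
by split=> //; move: hs; rewrite e1 add0r.
Qed.

Lemma lbrDl (P Q W : M) : lbr (P + Q) W = lbr P W + lbr Q W.
Proof. by rewrite /lbr mulmxDl mulmxDr opprD addrACA. Qed.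
Lemma lbrDr (P Q W : M) : lbr W (P + Q) = lbr W P + lbr W Q.
Proof. by rewrite /lbr mulmxDl mulmxDr opprD addrACA. Qed.
Lemma lbrZr k (P Q : M) : lbr P (k *: Q) = k *: lbr P Q.
Proof. by rewrite /lbr -scalemxAr -scalemxAl scalerBr. Qed.
Lemma lbrC (P Q : M) : lbr Q P = - lbr P Q.
Proof. by rewrite /lbr opprB. Qed.
Lemma lbrxx (P : M) : lbr P P = 0.
Proof. by rewrite /lbr subrr. Qed.

Lemma projmD (P Q : M) : projm n2 (P + Q) = projm n2 P + projm n2 Q.
Proof. apply/matrixP => a b; rewrite !mxE; case: ifP => //; by rewrite addr0. Qed.
Lemma projmN (P : M) : projm n2 (- P) = - projm n2 P.
Proof. apply/matrixP => a b; rewrite !mxE; case: ifP => //; by rewrite oppr0. Qed.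
Lemma projmZ k (P : M) : projm n2 (k *: P) = k *: projm n2 P.
Proof. apply/matrixP => a b; rewrite !mxE; case: ifP => //; by rewrite mulr0. Qed.
Lemma projmD4 (P Q S T : M) : projm n2 (P + Q + S + T) =
  projm n2 P + projm n2 Q + projm n2 S + projm n2 T.
Proof. by rewrite projmD (projmD (P + Q)) (projmD P). Qed.
Lemma projm0 : projm n2 (0 : M) = 0.
Proof. apply/matrixP => a b; rewrite !mxE; by case: ifP. Qed.

Lemma Xdec (X : M) : in_m n2 X ->
  X = Xso2 n2 X + X12 n2 X + X13 n2 X + X23 n2 X.
Proof.
move=> [hs h3]; apply/matrixP => a b; rewrite !mxE.
case: (cls_cases a) => ea; case: (cls_cases b) => eb; rewrite ea eb /=;
  rewrite ?add0r ?addr0 //.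
- have a0 := cls1 ea; have b0 := cls1 eb.
  have eab : a = b by apply: val_inj; rewrite /= a0 b0.
  subst b; have := congr1 (fun M : M => M a a) hs; rewrite !mxE => h; lra.
- by rewrite h3.
Qed.

Lemma sub4 (V : zmodType) (a b c d a' b' c' d' : V) :
  (a - a') + (b - b') + (c - c') + (d - d') = (a + b + c + d) - (a' + b' + c' + d').
Proof. by rewrite !opprD (addrACA (a + b + c)) (addrACA (a + b)) (addrACA a). Qed.

Lemma coef_ext (V : lmodType R) (p q r s : V) :
  (forall l2 l12 l13 l23 : R, 0 < l2 -> 0 < l12 -> 0 < l13 -> 0 < l23 ->
    l2 *: p + l12 *: q + l13 *: r + l23 *: s = 0) ->
  [/\ p = 0, q = 0, r = 0 & s = 0].
Proof.
move=> H.
have D : forall l2 l12 l13 l23 m2 m12 m13 m23 : R,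
   0 < l2 -> 0 < l12 -> 0 < l13 -> 0 < l23 ->
   0 < m2 -> 0 < m12 -> 0 < m13 -> 0 < m23 ->
   (l2 - m2) *: p + (l12 - m12) *: q + (l13 - m13) *: r + (l23 - m23) *: s = 0.
  move=> l2 l12 l13 l23 m2 m12 m13 m23 p1 p2 p3 p4 q1 q2 q3 q4.
  transitivity ((l2 *: p + l12 *: q + l13 *: r + l23 *: s) -
                (m2 *: p + m12 *: q + m13 *: r + m23 *: s)).
    by rewrite !scalerBl sub4.
  by rewrite H // H // subrr.
have o : (0 : R) < 1 by [].
have t : (0 : R) < 1 + 1 by rewrite addr_gt0.
have e : (1 + 1 : R) - 1 = 1 by rewrite addrK.
split.
- by have := D _ _ _ _ _ _ _ _ t o o o o o o o; rewrite e subrr !scale0r !addr0 scale1r.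
- by have := D _ _ _ _ _ _ _ _ o t o o o o o o; rewrite e subrr !scale0r !addr0 add0r scale1r.
- by have := D _ _ _ _ _ _ _ _ o o t o o o o o; rewrite e subrr !scale0r !addr0 !add0r scale1r.
- by have := D _ _ _ _ _ _ _ _ o o o t o o o o; rewrite e subrr !scale0r !addr0 !add0r scale1r.
Qed.

End H.

Unset Implicit Arguments.
Set Strict Implicit.

Ltac cl3 n2 := let x := fresh in let y := fresh in let c := fresh in
  move=> x y c; case: (cls_cases n2 x) => ->; case: (cls_cases n2 y) => ->;
  case: (cls_cases n2 c) => ->; by [].
Ltac cl2 n2 := let x := fresh in let y := fresh in
  move=> x y; case: (cls_cases n2 x) => ->; case: (cls_cases n2 y) => ->; by [].

Theorem mainTheorem6 (R : realFieldType) (n2 n3 : nat)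
  (hn2 : (2 <= n2)%N) (hn3 : (2 <= n3)%N) (X : 'M[R]_(1 + n2 + n3)) :
  in_m n2 X -> X != 0 ->
  (equigeodesic n2 X <->
    [/\ lbr (Xso2 n2 X) (X12 n2 X) = 0,
        lbr (Xso2 n2 X) (X23 n2 X) = 0,
        projm n2 (lbr (X12 n2 X) (X13 n2 X)) = 0,
        projm n2 (lbr (X12 n2 X) (X23 n2 X)) = 0 &
        projm n2 (lbr (X13 n2 X) (X23 n2 X)) = 0]).
Proof.
move=> hm hX0.
have hX := Xdec hm.
have Ekey : forall l2 l12 l13 l23 : R,
  projm n2 (lbr X (Lam n2 l2 l12 l13 l23 X)) =
  l2 *: projm n2 (lbr X (Xso2 n2 X)) + l12 *: projm n2 (lbr X (X12 n2 X)) +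
  l13 *: projm n2 (lbr X (X13 n2 X)) + l23 *: projm n2 (lbr X (X23 n2 X)).
  move=> l2 l12 l13 l23; by rewrite /Lam !lbrDr !lbrZr projmD4 !projmZ.
set A := Xso2 n2 X in hX Ekey *; set B := X12 n2 X in hX Ekey *;
set C := X13 n2 X in hX Ekey *; set D := X23 n2 X in hX Ekey *.
have sA : sp (sB 2 2) A by exact: blk_sp.
have sB' : sp (sB 1 2) B by exact: blk_sp.
have sC : sp (sB 1 3) C by exact: blk_sp.
have sD : sp (sB 2 3) D by exact: blk_sp.
have hAB : sp (sB 1 2) (lbr A B) by apply: lbr_sp sA sB' _ _; cl3 n2.
have hAD : sp (sB 2 3) (lbr A D) by apply: lbr_sp sA sD _ _; cl3 n2.
have hAC : sp (fun _ _ => false) (lbr A C) by apply: lbr_sp sA sC _ _; cl3 n2.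
have hBC : sp (sB 2 3) (lbr B C) by apply: lbr_sp sB' sC _ _; cl3 n2.
have hBD : sp (sB 1 3) (lbr B D) by apply: lbr_sp sB' sD _ _; cl3 n2.
have hCD : sp (sB 1 2) (lbr C D) by apply: lbr_sp sC sD _ _; cl3 n2.
have AC0 : lbr A C = 0 by apply/matrixP => a b; rewrite [RHS]mxE; exact: hAC.
have pAB : projm n2 (lbr A B) = lbr A B by apply: projm_id hAB _.
have pAD : projm n2 (lbr A D) = lbr A D by apply: projm_id hAD _.
have eA : projm n2 (lbr X A) = - projm n2 (lbr A B) - projm n2 (lbr A D).
  rewrite hX !lbrDl lbrxx (lbrC A B) (lbrC A C) (lbrC A D) AC0 projmD4 !projmN projm0.
  by rewrite oppr0 add0r addr0.
have eB : projm n2 (lbr X B) = projm n2 (lbr A B) - projm n2 (lbr B C) - projm n2 (lbr B D).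
  rewrite hX !lbrDl lbrxx (lbrC B C) (lbrC B D) projmD4 !projmN projm0.
  by rewrite addr0.
have eC : projm n2 (lbr X C) = projm n2 (lbr B C) - projm n2 (lbr C D).
  rewrite hX !lbrDl lbrxx (lbrC C D) AC0 projmD4 !projmN projm0.
  by rewrite add0r addr0.
have eD : projm n2 (lbr X D) = projm n2 (lbr A D) + projm n2 (lbr B D) + projm n2 (lbr C D).
  by rewrite hX !lbrDl lbrxx projmD4 projm0 addr0.
split.
- move=> [_ [_ H]].
  have [hPA hPB hPC hPD] := coef_ext (fun l2 l12 l13 l23 p1 p2 p3 p4 =>
     etrans (esym (Ekey l2 l12 l13 l23)) (H l2 l12 l13 l23 p1 p2 p3 p4)).
  rewrite eA in hPA.
  have [h1 h2] := disj (spN (sp_projm hAB)) (spN (sp_projm hAD)) ltac:(cl2 n2) hPA.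
  move/eqP: h1; rewrite oppr_eq0 => /eqP h1.
  move/eqP: h2; rewrite oppr_eq0 => /eqP h2.
  rewrite eB h1 sub0r in hPB.
  have [h3 h4] := disj (spN (sp_projm hBC)) (spN (sp_projm hBD)) ltac:(cl2 n2) hPB.
  move/eqP: h3; rewrite oppr_eq0 => /eqP h3.
  move/eqP: h4; rewrite oppr_eq0 => /eqP h4.
  rewrite eC h3 sub0r in hPC.
  move/eqP: hPC; rewrite oppr_eq0 => /eqP h5.
  by split=> //; [rewrite -pAB | rewrite -pAD].
- case=> h1 h2 h3 h4 h5; split=> //; split=> // l2 l12 l13 l23 *.
  rewrite Ekey eA eB eC eD pAB pAD h1 h2 h3 h4 h5.
  by rewrite !(oppr0, subr0, addr0, scaler0).
Qed.
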